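(* Let $n\ge 4$, $t\ge 1$, and $l_1,\dots,l_t\ge 1$ be integers, and put $n'=\sum_{i=1}^{t}(l_i-1)$; assume $n-n'\ge 3$. Then the chordless cycle $C_n$ has an IP-SEG representation with exactly $t$ interval arcs, of lengths $l_1,\dots,l_t$, if and only if $C_{n-n'}$ has an IP-SEG representation with exactly $t$ interval arcs, each of length $1$.
   Context: Let $L_1$ and $L_2$ be two distinct parallel horizontal lines in the plane. A closed straight line segment is an interval segment if both of its endpoints lie on the same line $L_i$, and a permutation segment if one endpoint lies on $L_1$ and the other on $L_2$. An IP-SEG model is a finite family of interval and permutation segments; its intersection graph has one vertex per segment, adjacent iff the segments intersect. For $m\ge 3$, $C_m$ is the chordless cycle on $v_1,\dots,v_m$ with $v_i$ adjacent to $v_{i+1}$ (indices mod $m$) and no other edges. An IP-SEG representation of $C_m$ is an IP-SEG model with segments $s(v_1),\dots,s(v_m)$ whose intersection graph is $C_m$ with $s(v_i)$ corresponding to $v_i$. If such a representation contains both interval and permutation segments, an interval arc is a maximal sequence $s(v_i),s(v_{i+1}),\dots,s(v_j)$ of cyclically consecutive segments that are all interval segments (so $s(v_{i-1})$ and $s(v_{j+1})$ are permutation segments, indices mod $m$); its length is the number of segments in it. Permutation arcs are defined analogously. *)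

(* Defs.v *)
From Stdlib Require Import Reals Lra Lia Arith List Permutation.
Open Scope R_scope.

(* The two parallel horizontal lines are fixed (WLOG) as
   L1 = {y = 0} and L2 = {y = 1}. *)
Definition point := (R * R)%type.

Record segment := mkSeg { ep1 : point; ep2 : point }.

Definition on_seg (s : segment) (z : point) : Prop :=
  exists lam : R, 0 <= lam <= 1 /\
    fst z = fst (ep1 s) + lam * (fst (ep2 s) - fst (ep1 s)) /\
    snd z = snd (ep1 s) + lam * (snd (ep2 s) - snd (ep1 s)).

Definition on_L1 (p : point) : Prop := snd p = 0.
Definition on_L2 (p : point) : Prop := snd p = 1.

Definition nondegenerate (s : segment) : Prop := ep1 s <> ep2 s.

Definition interval_seg (s : segment) : Prop :=
  nondegenerate s /\
  ((on_L1 (ep1 s) /\ on_L1 (ep2 s)) \/ (on_L2 (ep1 s) /\ on_L2 (ep2 s))).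

Definition permutation_seg (s : segment) : Prop :=
  (on_L1 (ep1 s) /\ on_L2 (ep2 s)) \/ (on_L2 (ep1 s) /\ on_L1 (ep2 s)).

Definition ip_seg (s : segment) : Prop := interval_seg s \/ permutation_seg s.

Definition seg_intersect (s1 s2 : segment) : Prop :=
  exists z : point, on_seg s1 z /\ on_seg s2 z.

(* Adjacency in the chordless cycle C_m on vertices 0,...,m-1
   (v_{i+1} of the paper is vertex i here). *)
Definition cycle_adj (m i j : nat) : Prop :=
  j = ((i + 1) mod m)%nat \/ i = ((j + 1) mod m)%nat.

(* s : nat -> segment (only indices < m matter) is an IP-SEG representation
   of C_m: every segment is an interval or permutation segment and, for
   distinct vertices, segments intersect iff the vertices are adjacent. *)
Definition ipseg_rep (m : nat) (s : nat -> segment) : Prop :=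
  (forall i, (i < m)%nat -> ip_seg (s i)) /\
  (forall i j, (i < m)%nat -> (j < m)%nat -> i <> j ->
     (seg_intersect (s i) (s j) <-> cycle_adj m i j)).

Definition mixed_rep (m : nat) (s : nat -> segment) : Prop :=
  (exists i, (i < m)%nat /\ interval_seg (s i)) /\
  (exists j, (j < m)%nat /\ permutation_seg (s j)).

Definition arc_start (m : nat) (s : nat -> segment) (i : nat) : Prop :=
  (i < m)%nat /\ interval_seg (s i) /\
  ~ interval_seg (s ((i + m - 1) mod m)%nat).

Definition arc_length (m : nat) (s : nat -> segment) (i k : nat) : Prop :=
  (forall j, (j < k)%nat -> interval_seg (s ((i + j) mod m)%nat)) /\
  ~ interval_seg (s ((i + k) mod m)%nat).

Definition interval_arcs (m : nat) (s : nat -> segment) (ls : list nat) : Prop :=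
  mixed_rep m s /\
  exists starts lens : list nat,
    NoDup starts /\
    (forall i, In i starts <-> arc_start m s i) /\
    Forall2 (arc_length m s) starts lens /\
    Permutation lens ls.

Definition has_rep_with_arcs (m : nat) (ls : list nat) : Prop :=
  exists s : nat -> segment, ipseg_rep m s /\ interval_arcs m s ls.

Definition n_prime (ls : list nat) : nat :=
  fold_right (fun l acc => (l - 1 + acc)%nat) 0%nat ls.

(* Main.v *)
Require Import Defs.
From Stdlib Require Import Reals Lra Lia Arith List Permutation ClassicalEpsilon.
Open Scope R_scope.


Definition hseg (h a b : R) : segment := mkSeg (a,h) (b,h).

Lemma on_seg_hor : forall s h, snd (ep1 s) = h -> snd (ep2 s) = h -> forall z,
  on_seg s z <-> snd z = h /\ Rmin (fst (ep1 s)) (fst (ep2 s)) <= fst z <= Rmax (fst (ep1 s)) (fst (ep2 s)).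
Proof.
  intros [[x1 y1] [x2 y2]] h H1 H2 [zx zy]; simpl in *; subst. unfold on_seg; simpl.
  split.
  - intros [lam [[H0 H1] [Hx Hy]]].
    replace (lam * (h - h)) with 0 in Hy by ring.
    split; [lra|]. unfold Rmin, Rmax; destruct (Rle_dec x1 x2); (split; [nra|nra]).
  - intros [Hy Hb]. destruct (Req_dec x1 x2) as [E|E].
    + subst x1. exists 0. unfold Rmin, Rmax in Hb; destruct (Rle_dec x2 x2); (split; [lra|split; lra]).
    + exists ((zx - x1)/(x2-x1)).
      assert (Hl : (zx - x1)/(x2-x1) * (x2 - x1) = zx - x1) by (field; lra).
      set (lam := (zx - x1)/(x2-x1)) in *.
      unfold Rmin, Rmax in Hb; destruct (Rle_dec x1 x2).
      * assert (x1 < x2) by lra. split; [split; nra|split; [lra| ring_simplify; lra]].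
      * assert (x2 < x1) by lra. split; [split; nra|split; [lra| ring_simplify; lra]].
Qed.

Lemma on_hseg : forall h a b z, a <= b -> (on_seg (hseg h a b) z <-> snd z = h /\ a <= fst z <= b).
Proof.
  intros h a b z Hab. rewrite (on_seg_hor (hseg h a b) h eq_refl eq_refl z). simpl.
  rewrite Rmin_left, Rmax_right by lra. tauto.
Qed.

Lemma interval_desc : forall s, interval_seg s -> exists h a b, (h = 0 \/ h = 1) /\ a < b /\
  forall z, on_seg s z <-> snd z = h /\ a <= fst z <= b.
Proof.
  intros s [Hnd Hl].
  assert (exists h, (h = 0 \/ h = 1) /\ snd (ep1 s) = h /\ snd (ep2 s) = h) as [h [Hh [E1 E2]]].
  { unfold on_L1, on_L2 in Hl. destruct Hl as [[A B]|[A B]]; eauto. }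
  exists h, (Rmin (fst (ep1 s)) (fst (ep2 s))), (Rmax (fst (ep1 s)) (fst (ep2 s))).
  split; [auto|split].
  - unfold nondegenerate in Hnd. destruct s as [[x1 y1] [x2 y2]]; simpl in *; subst.
    unfold Rmin, Rmax; destruct (Rle_dec x1 x2).
    + destruct (Req_dec x1 x2); [subst; exfalso; apply Hnd; reflexivity| lra].
    + lra.
  - apply on_seg_hor; auto.
Qed.

Lemma perm_desc : forall s h, permutation_seg s -> 0 <= h <= 1 ->
  exists x, forall z, snd z = h -> (on_seg s z <-> fst z = x).
Proof.
  intros [[x1 y1] [x2 y2]] h Hp Hh. unfold permutation_seg, on_L1, on_L2 in Hp; simpl in Hp.
  unfold on_seg; simpl.
  destruct Hp as [[A B]|[A B]]; subst.
  - exists (x1 + h * (x2 - x1)). intros [zx zy] Hz; simpl in *; subst h. split.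
    + intros [lam [_ [Hx Hy]]]. assert (lam = zy) by lra. subst. lra.
    + intros Hx. exists zy. split; [lra|split; lra].
  - exists (x1 + (1-h) * (x2 - x1)). intros [zx zy] Hz; simpl in *; subst h. split.
    + intros [lam [_ [Hx Hy]]]. assert (lam = 1 - zy) by lra. subst. lra.
    + intros Hx. exists (1 - zy). split; [lra|split; lra].
Qed.

Lemma line_desc : forall s h, ip_seg s -> (h = 0 \/ h = 1) ->
  (exists a b, a <= b /\ forall z, snd z = h -> (on_seg s z <-> a <= fst z <= b)) \/
  (forall z, snd z = h -> ~ on_seg s z).
Proof.
  intros s h [Hi|Hp] Hh.
  - destruct (interval_desc s Hi) as [h' [a [b [Hh' [Hab Hd]]]]].
    destruct (Req_dec h h') as [E|E].
    + left. exists a, b. split; [lra|]. intros z Hz. rewrite Hd. subst. tauto.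
    + right. intros z Hz Hon. apply Hd in Hon. lra.
  - destruct (perm_desc s h Hp) as [x Hx]; [lra|].
    left. exists x, x. split; [lra|]. intros z Hz. rewrite (Hx z Hz). lra.
Qed.

Lemma seg_intersect_sym : forall a b, seg_intersect a b -> seg_intersect b a.
Proof. intros a b [z [H1 H2]]. exists z; auto. Qed.

Lemma interval_hseg : forall h a b, (h = 0 \/ h = 1) -> a < b -> interval_seg (hseg h a b).
Proof.
  intros h a b Hh Hab. split.
  - unfold nondegenerate; simpl. intro E. inversion E. lra.
  - unfold on_L1, on_L2; simpl. destruct Hh; [left|right]; auto.
Qed.

Lemma perm_not_interval : forall s, permutation_seg s -> ~ interval_seg s.
Proof.
  intros s Hp [_ Hi]. unfold permutation_seg, on_L1, on_L2 in *. lra.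
Qed.

Lemma merge_seg : forall s0 s1, interval_seg s0 -> interval_seg s1 -> seg_intersect s0 s1 ->
  exists U, interval_seg U /\ forall z, on_seg U z <-> on_seg s0 z \/ on_seg s1 z.
Proof.
  intros s0 s1 H0 H1 [z [Z0 Z1]].
  destruct (interval_desc s0 H0) as [h0 [a0 [b0 [Hh0 [Hab0 D0]]]]].
  destruct (interval_desc s1 H1) as [h1 [a1 [b1 [Hh1 [Hab1 D1]]]]].
  apply D0 in Z0. apply D1 in Z1.
  exists (hseg h0 (Rmin a0 a1) (Rmax b0 b1)).
  assert (Rmin a0 a1 < Rmax b0 b1) by (unfold Rmin, Rmax; destruct (Rle_dec a0 a1), (Rle_dec b0 b1); lra).
  split; [apply interval_hseg; auto|].
  intros w. rewrite on_hseg by lra. rewrite D0, D1.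
  unfold Rmin, Rmax; destruct (Rle_dec a0 a1), (Rle_dec b0 b1); split; intros; lra.
Qed.

Lemma split_seg : forall I a b h lo hi, lo < hi -> (h = 0 \/ h = 1) ->
  (forall z, on_seg I z <-> snd z = h /\ lo <= fst z <= hi) ->
  ip_seg a -> ip_seg b -> seg_intersect I a -> seg_intersect I b -> ~ seg_intersect a b ->
  exists c1 c2, interval_seg c1 /\ interval_seg c2 /\ seg_intersect c1 c2 /\
    seg_intersect c1 b /\ seg_intersect c2 a /\ ~ seg_intersect c1 a /\ ~ seg_intersect c2 b /\
    (forall z, on_seg c1 z -> on_seg I z) /\ (forall z, on_seg c2 z -> on_seg I z).
Proof.
  intros I a b h lo hi Hlh Hh DI Ha Hb [za [ZaI Za]] [zb [ZbI Zb]] Nab.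
  apply DI in ZaI. apply DI in ZbI.
  destruct (line_desc a h Ha Hh) as [[a1 [a2 [Ha12 Da]]]|Ea];
    [| exfalso; apply (Ea za); tauto].
  destruct (line_desc b h Hb Hh) as [[b1 [b2 [Hb12 Db]]]|Eb];
    [| exfalso; apply (Eb zb); tauto].
  pose proof (proj1 (Da za (proj1 ZaI)) Za) as Xa.
  pose proof (proj1 (Db zb (proj1 ZbI)) Zb) as Xb.
  assert (Hdis : a2 < b1 \/ b2 < a1).
  { destruct (Rlt_le_dec a2 b1) as [|L1]; [left; auto|].
    destruct (Rlt_le_dec b2 a1) as [|L2]; [right; auto|].
    exfalso. apply Nab. exists (Rmax a1 b1, h).
    split; [apply Da|apply Db]; simpl; auto; unfold Rmax; destruct (Rle_dec a1 b1); lra. }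
  destruct Hdis as [D|D].
  - set (pa := Rmin a2 hi). set (pb := Rmax b1 lo).
    assert (Hpa : Rmax a1 lo <= pa /\ pa <= a2 /\ pa <= hi /\ forall x, x <= a2 -> x <= hi -> x <= pa)
      by (unfold pa, Rmin, Rmax; destruct (Rle_dec a2 hi), (Rle_dec a1 lo); repeat split; intros; lra).
    assert (Hpb : pb <= Rmin b2 hi /\ b1 <= pb /\ lo <= pb /\ forall x, b1 <= x -> lo <= x -> pb <= x)
      by (unfold pb, Rmin, Rmax; destruct (Rle_dec b1 lo), (Rle_dec b2 hi); repeat split; intros; lra).
    assert (lo <= pa) by (unfold Rmax in Hpa; destruct (Rle_dec a1 lo); lra).
    assert (a1 <= pa) by (unfold Rmax in Hpa; destruct (Rle_dec a1 lo); lra).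
    assert (pb <= hi) by (unfold Rmin in Hpb; destruct (Rle_dec b2 hi); lra).
    assert (pb <= b2) by (unfold Rmin in Hpb; destruct (Rle_dec b2 hi); lra).
    assert (pa < pb) by lra.
    set (w := (pa + pb) / 2).
    exists (hseg h w hi), (hseg h lo w).
    assert (lo < w) by (unfold w; lra). assert (w < hi) by (unfold w; lra).
    split; [apply interval_hseg; auto; lra|]. split; [apply interval_hseg; auto; lra|].
    repeat split.
    + exists (w, h). rewrite !on_hseg by lra. simpl. lra.
    + exists (pb, h). rewrite on_hseg by lra. rewrite (Db (pb,h) eq_refl). simpl. unfold w; lra.
    + exists (pa, h). rewrite on_hseg by lra. rewrite (Da (pa,h) eq_refl). simpl. unfold w; lra.
    + intros [z [Z1 Z2]]. rewrite on_hseg in Z1 by lra. destruct Z1 as [Zh Zr].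
      apply (Da z Zh) in Z2. pose proof (proj2 (proj2 (proj2 Hpa)) (fst z)). unfold w in *; lra.
    + intros [z [Z1 Z2]]. rewrite on_hseg in Z1 by lra. destruct Z1 as [Zh Zr].
      apply (Db z Zh) in Z2. pose proof (proj2 (proj2 (proj2 Hpb)) (fst z)). unfold w in *; lra.
    + intros z Z. rewrite on_hseg in Z by lra. apply DI. lra.
    + intros z Z. rewrite on_hseg in Z by lra. apply DI. lra.
  - set (pb := Rmin b2 hi). set (pa := Rmax a1 lo).
    assert (Hpb : Rmax b1 lo <= pb /\ pb <= b2 /\ pb <= hi /\ forall x, x <= b2 -> x <= hi -> x <= pb)
      by (unfold pb, Rmin, Rmax; destruct (Rle_dec b2 hi), (Rle_dec b1 lo); repeat split; intros; lra).
    assert (Hpa : pa <= Rmin a2 hi /\ a1 <= pa /\ lo <= pa /\ forall x, a1 <= x -> lo <= x -> pa <= x)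
      by (unfold pa, Rmin, Rmax; destruct (Rle_dec a1 lo), (Rle_dec a2 hi); repeat split; intros; lra).
    assert (lo <= pb) by (unfold Rmax in Hpb; destruct (Rle_dec b1 lo); lra).
    assert (b1 <= pb) by (unfold Rmax in Hpb; destruct (Rle_dec b1 lo); lra).
    assert (pa <= hi) by (unfold Rmin in Hpa; destruct (Rle_dec a2 hi); lra).
    assert (pa <= a2) by (unfold Rmin in Hpa; destruct (Rle_dec a2 hi); lra).
    assert (pb < pa) by lra.
    set (w := (pa + pb) / 2).
    exists (hseg h lo w), (hseg h w hi).
    assert (lo < w) by (unfold w; lra). assert (w < hi) by (unfold w; lra).
    split; [apply interval_hseg; auto; lra|]. split; [apply interval_hseg; auto; lra|].
    repeat split.
    + exists (w, h). rewrite !on_hseg by lra. simpl. lra.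
    + exists (pb, h). rewrite on_hseg by lra. rewrite (Db (pb,h) eq_refl). simpl. unfold w; lra.
    + exists (pa, h). rewrite on_hseg by lra. rewrite (Da (pa,h) eq_refl). simpl. unfold w; lra.
    + intros [z [Z1 Z2]]. rewrite on_hseg in Z1 by lra. destruct Z1 as [Zh Zr].
      apply (Da z Zh) in Z2. pose proof (proj2 (proj2 (proj2 Hpa)) (fst z)). unfold w in *; lra.
    + intros [z [Z1 Z2]]. rewrite on_hseg in Z1 by lra. destruct Z1 as [Zh Zr].
      apply (Db z Zh) in Z2. pose proof (proj2 (proj2 (proj2 Hpb)) (fst z)). unfold w in *; lra.
    + intros z Z. rewrite on_hseg in Z by lra. apply DI. lra.
    + intros z Z. rewrite on_hseg in Z by lra. apply DI. lra.
Qed.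

Open Scope nat_scope.

Lemma succ_mod : forall m i, i < m -> (i + 1) mod m = if i + 1 <? m then i + 1 else 0.
Proof.
  intros m i H. destruct (Nat.ltb_spec (i+1) m).
  - apply Nat.mod_small; auto.
  - replace (i+1) with m by lia. apply Nat.mod_same. lia.
Qed.

Lemma adj_char : forall m i j, i < m -> j < m ->
  (cycle_adj m i j <-> j = S i \/ i = S j \/ (i = m-1 /\ j = 0) \/ (j = m - 1 /\ i = 0)).
Proof.
  intros m i j Hi Hj. unfold cycle_adj. rewrite !succ_mod by auto.
  destruct (Nat.ltb_spec (i+1) m), (Nat.ltb_spec (j+1) m); split; intros; lia.
Qed.

Lemma cycle_adj_sym : forall m i j, cycle_adj m i j -> cycle_adj m j i.
Proof. unfold cycle_adj; tauto. Qed.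

Lemma addmod_case : forall m i j, i < m -> j < m ->
  (j + i) mod m = if j + i <? m then j + i else j + i - m.
Proof.
  intros m i j Hi Hj. destruct (Nat.ltb_spec (j+i) m).
  - apply Nat.mod_small; auto.
  - replace (j + i) with ((j + i - m) + 1 * m) at 1 by lia.
    rewrite Nat.mod_add by lia. apply Nat.mod_small; lia.
Qed.

Definition ib (x : segment) : bool :=
  if excluded_middle_informative (interval_seg x) then true else false.

Lemma ib_true : forall x, ib x = true <-> interval_seg x.
Proof. intros x. unfold ib. destruct (excluded_middle_informative _); split; intros; try tauto; discriminate. Qed.

Lemma ib_false : forall x, ib x = false <-> ~ interval_seg x.
Proof. intros x. unfold ib. destruct (excluded_middle_informative _); split; intros; try tauto; discriminate. Qed.

Definition startb (f : nat -> bool) (i : nat) : bool :=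
  f i && match i with 0 => true | S i' => negb (f i') end.

Fixpoint lenF (f : nat -> bool) (i fuel : nat) : nat :=
  match fuel with 0 => 0 | S n => if f i then S (lenF f (S i) n) else 0 end.

Definition lens_of (f : nat -> bool) (M : nat) : list nat :=
  map (fun i => lenF f i (M - i)) (filter (startb f) (seq 0 M)).

Lemma arc_length_unique : forall M s i k k', arc_length M s i k -> arc_length M s i k' -> k = k'.
Proof.
  intros M s i k k' [A1 A2] [B1 B2].
  destruct (lt_eq_lt_dec k k') as [[lt|eq]|gt]; auto.
  - exfalso. apply A2. apply B1. auto.
  - exfalso. apply B2. apply A1. auto.
Qed.

Lemma lenF_spec : forall (f : nat -> bool) M, f (M - 1) = false -> forall fuel i, i < M -> i + fuel = M ->
  (forall j, j < lenF f i fuel -> f (i + j) = true) /\ i + lenF f i fuel < M /\ f (i + lenF f i fuel) = false.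
Proof.
  intros f M HM fuel. induction fuel as [|n IH]; intros i Hi Hf.
  - lia.
  - simpl. destruct (f i) eqn:Fi.
    + destruct (Nat.ltb_spec (S i) M) as [L|L].
      * destruct (IH (S i) L ltac:(lia)) as [A [B C]]. split; [|split].
        -- intros j Hj. destruct j as [|j]. { rewrite Nat.add_0_r; auto. }
           replace (i + S j) with (S i + j) by lia. apply A. lia.
        -- lia.
        -- replace (i + S (lenF f (S i) n)) with (S i + lenF f (S i) n) by lia. auto.
      * replace i with (M - 1) in Fi by lia. congruence.
    + split; [intros; lia|]. rewrite Nat.add_0_r. split; auto.
Qed.

Lemma lenF_arc : forall M s i, ~ interval_seg (s (M - 1)) -> i < M ->
  arc_length M s i (lenF (fun j => ib (s j)) i (M - i)).
Proof.
  intros M s i HM Hi.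
  destruct (lenF_spec (fun j => ib (s j)) M (proj2 (ib_false _) HM) (M - i) i Hi ltac:(lia)) as [A [B C]].
  split.
  - intros j Hj. rewrite Nat.mod_small by lia. apply ib_true. apply A; auto.
  - rewrite Nat.mod_small by lia. apply ib_false. auto.
Qed.

Lemma Forall2_map_eq : forall {A B} (R : A -> B -> Prop) (g : A -> B) l1 l2,
  Forall2 R l1 l2 -> (forall x y, In x l1 -> R x y -> y = g x) -> l2 = map g l1.
Proof.
  intros A B R g l1 l2 H. induction H; intros Hg; simpl; auto.
  f_equal; [apply Hg; simpl; auto|]. apply IHForall2. intros; apply Hg; simpl; auto.
Qed.

Lemma Forall2_map_intro : forall {A B} (R : A -> B -> Prop) (g : A -> B) l,
  (forall x, In x l -> R x (g x)) -> Forall2 R l (map g l).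
Proof.
  intros A B R g l. induction l; intros H; simpl; constructor; auto.
  - apply H; simpl; auto.
  - apply IHl. intros; apply H; simpl; auto.
Qed.

Lemma Forall2_in_r : forall {A B} (R : A -> B -> Prop) l1 l2 y,
  Forall2 R l1 l2 -> In y l2 -> exists x, In x l1 /\ R x y.
Proof.
  intros A B R l1 l2 y H. induction H; simpl; intros Hy; [contradiction|].
  destruct Hy as [E|Hy]; [subst; eauto|]. destruct (IHForall2 Hy) as [x' [? ?]]; eauto.
Qed.

Lemma Forall2_map_l : forall {A B} (R R' : A -> B -> Prop) (f : A -> A) l1 l2,
  Forall2 R l1 l2 -> (forall x y, In x l1 -> R x y -> R' (f x) y) -> Forall2 R' (map f l1) l2.
Proof.
  intros A B R R' f l1 l2 H. induction H; intros Hf; simpl; constructor.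
  - apply Hf; simpl; auto.
  - apply IHForall2. intros; apply Hf; simpl; auto.
Qed.

Lemma NoDup_map_in : forall {A B} (f : A -> B) l,
  (forall x y, In x l -> In y l -> f x = f y -> x = y) -> NoDup l -> NoDup (map f l).
Proof.
  intros A B f l Hf H. induction H; simpl; constructor.
  - intros Hin. apply in_map_iff in Hin. destruct Hin as [y [E Hy]].
    assert (y = x) by (apply Hf; simpl; auto). subst; contradiction.
  - apply IHNoDup. intros; apply Hf; simpl; auto.
Qed.

Lemma arc_start_lin : forall M s i, 1 <= M -> ~ interval_seg (s (M - 1)) ->
  (arc_start M s i <-> In i (filter (startb (fun j => ib (s j))) (seq 0 M))).
Proof.
  intros M s i HM HL. rewrite filter_In, in_seq. unfold arc_start, startb.
  destruct i as [|i].
  - rewrite Nat.add_0_l, Nat.mod_small by lia. rewrite Bool.andb_true_r, ib_true. split; [intros [A [B C]]; split; [lia|auto] | intros [A B]; split; [lia|auto]].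
  - replace (S i + M - 1) with (i + 1 * M) by lia. rewrite Nat.mod_add by lia.
    split.
    + intros [H1 [H2 H3]]. rewrite Nat.mod_small in H3 by lia. split; [lia|].
      apply andb_true_intro; split; [apply ib_true; auto|]. apply Bool.negb_true_iff, ib_false. auto.
    + intros [H1 H2]. apply andb_prop in H2. destruct H2 as [H2 H3].
      apply Bool.negb_true_iff, ib_false in H3. apply ib_true in H2.
      rewrite Nat.mod_small by lia. split; [lia|auto].
Qed.

Lemma Arcs_lin : forall M s ls, 1 <= M -> ~ interval_seg (s (M - 1)) ->
  (interval_arcs M s ls <-> mixed_rep M s /\ Permutation (lens_of (fun j => ib (s j)) M) ls).
Proof.
  intros M s ls HM HL.
  set (F := filter (startb (fun j => ib (s j))) (seq 0 M)).
  set (g := fun i => lenF (fun j => ib (s j)) i (M - i)).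
  assert (HF : forall x, In x F -> x < M).
  { intros x Hx. unfold F in Hx. rewrite filter_In, in_seq in Hx. lia. }
  assert (NF : NoDup F) by (apply NoDup_filter, seq_NoDup).
  split.
  - intros [Hmix [st [ln [Hnd [Hin [HF2 HP]]]]]]. split; auto.
    assert (Pst : Permutation st F).
    { apply NoDup_Permutation; auto. intros x. rewrite Hin. apply arc_start_lin; auto. }
    assert (Eln : ln = map g st).
    { apply (Forall2_map_eq _ g _ _ HF2). intros x y Hx Hxy.
      apply (arc_length_unique M s x); auto. apply lenF_arc; auto.
      apply Hin in Hx. destruct Hx; auto. }
    subst ln. unfold lens_of. fold F. fold g.
    eapply Permutation_trans; [|exact HP]. apply Permutation_map. apply Permutation_sym; auto.
  - intros [Hmix HP]. split; auto. exists F, (map g F). split; [auto|split; [|split]].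
    + intros x. symmetry. apply arc_start_lin; auto.
    + apply Forall2_map_intro. intros x Hx. apply lenF_arc; auto.
    + exact HP.
Qed.

Open Scope nat_scope.

Definition rot (M i : nat) (s : nat -> segment) : nat -> segment := fun j => s ((j + i) mod M).

Lemma rot_rep : forall M i s, i < M -> ipseg_rep M s -> ipseg_rep M (rot M i s).
Proof.
  intros M i s Hi [Hip Hint]. unfold rot. split.
  - intros j Hj. apply Hip. apply Nat.mod_upper_bound. lia.
  - intros j1 j2 H1 H2 Hne. rewrite Hint.
    + rewrite !addmod_case by auto.
      destruct (Nat.ltb_spec (j1 + i) M), (Nat.ltb_spec (j2 + i) M);
      rewrite !adj_char by lia; split; intros; lia.
    + apply Nat.mod_upper_bound; lia.
    + apply Nat.mod_upper_bound; lia.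
    + rewrite !addmod_case by auto.
      destruct (Nat.ltb_spec (j1 + i) M), (Nat.ltb_spec (j2 + i) M); lia.
Qed.

Lemma rot_idx : forall M i j l, M <> 0 -> ((j + l) mod M + i) mod M = ((j + i) mod M + l) mod M.
Proof.
  intros. rewrite !Nat.Div0.add_mod_idemp_l. f_equal. lia.
Qed.

Lemma arc_start_rot : forall M i s j, 1 <= M -> j < M ->
  (arc_start M (rot M i s) j <-> arc_start M s ((j + i) mod M)).
Proof.
  intros M i s j HM Hj. unfold arc_start, rot.
  assert (E : ((j + M - 1) mod M + i) mod M = ((j + i) mod M + M - 1) mod M).
  { replace ((j + i) mod M + M - 1) with ((j + i) mod M + (M - 1)) by lia.
    rewrite !Nat.Div0.add_mod_idemp_l. f_equal. lia. }
  rewrite E. pose proof (Nat.mod_upper_bound (j + i) M ltac:(lia)). tauto.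
Qed.

Lemma arc_length_rot : forall M i s j k, 1 <= M ->
  (arc_length M (rot M i s) j k <-> arc_length M s ((j + i) mod M) k).
Proof.
  intros M i s j k HM. unfold arc_length, rot.
  split; intros [A B]; split.
  - intros l Hl. rewrite <- rot_idx by lia. apply A; auto.
  - rewrite <- rot_idx by lia. auto.
  - intros l Hl. rewrite rot_idx by lia. apply A; auto.
  - rewrite rot_idx by lia. auto.
Qed.

Lemma r_inv1 : forall M i x, x < M -> i < M -> ((x + (M - i)) mod M + i) mod M = x.
Proof.
  intros. rewrite Nat.Div0.add_mod_idemp_l. replace (x + (M - i) + i) with (x + 1 * M) by lia.
  rewrite Nat.Div0.mod_add. apply Nat.mod_small; auto.
Qed.

Lemma r_inv2 : forall M i j, j < M -> i < M -> ((j + i) mod M + (M - i)) mod M = j.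
Proof.
  intros. rewrite Nat.Div0.add_mod_idemp_l. replace (j + i + (M - i)) with (j + 1 * M) by lia.
  rewrite Nat.Div0.mod_add. apply Nat.mod_small; auto.
Qed.

Lemma rot_arcs : forall M i s ls, i < M -> interval_arcs M s ls -> interval_arcs M (rot M i s) ls.
Proof.
  intros M i s ls Hi [[[x [Hx Ix]] [y [Hy Py]]] [st [ln [Hnd [Hin [HF HP]]]]]].
  set (r := fun x => (x + (M - i)) mod M).
  assert (HM : 1 <= M) by lia.
  assert (Hst : forall x, In x st -> x < M) by (intros z Hz; apply Hin in Hz; destruct Hz; auto).
  split; [split|].
  - exists (r x). split; [apply Nat.mod_upper_bound; lia|]. unfold rot, r. rewrite r_inv1; auto.
  - exists (r y). split; [apply Nat.mod_upper_bound; lia|]. unfold rot, r. rewrite r_inv1; auto.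
  - exists (map r st), ln. split; [|split; [|split]].
    + apply NoDup_map_in; auto. intros a b Ha Hb E.
      rewrite <- (r_inv1 M i a), <- (r_inv1 M i b); auto; unfold r in E; rewrite E; auto.
    + intros j. rewrite in_map_iff. split.
      * intros [z [E Hz]]. subst j. assert (z < M) by auto.
        apply arc_start_rot; auto. { apply Nat.mod_upper_bound; lia. }
        unfold r. rewrite r_inv1; auto. apply Hin; auto.
      * intros H. assert (Hj : j < M) by (destruct H; auto).
        apply arc_start_rot in H; auto. exists ((j + i) mod M). split.
        -- unfold r. apply r_inv2; auto.
        -- apply Hin; auto.
    + apply (Forall2_map_l _ _ r _ _ HF). intros a b Ha Hab.
      apply arc_length_rot; auto. unfold r. rewrite r_inv1; auto.
    + auto.
Qed.

Lemma normalize : forall M ls L, has_rep_with_arcs M ls -> In L ls ->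
  exists s, ipseg_rep M s /\ interval_arcs M s ls /\ arc_start M s 0 /\ arc_length M s 0 L.
Proof.
  intros M ls L [s [Hrep Harcs]] HL.
  pose proof Harcs as [[[x [Hx _]] _] [st [ln [Hnd [Hin [HF HP]]]]]].
  assert (HLn : In L ln) by (apply (Permutation_in _ (Permutation_sym HP)); auto).
  destruct (Forall2_in_r _ _ _ _ HF HLn) as [i [Hi Hil]].
  assert (HiM : i < M) by (apply Hin in Hi; destruct Hi; auto).
  exists (rot M i s). split; [apply rot_rep; auto|split; [apply rot_arcs; auto|split]].
  - apply arc_start_rot; [lia|lia|]. rewrite Nat.add_0_l, Nat.mod_small by auto. apply Hin; auto.
  - apply arc_length_rot; [lia|]. rewrite Nat.add_0_l, Nat.mod_small by auto. auto.
Qed.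

Lemma lenF_shift : forall (Q P : nat -> bool) m, (forall j, j < m -> Q (S j) = P j) ->
  forall fuel i, i + fuel <= m -> lenF Q (S i) fuel = lenF P i fuel.
Proof.
  intros Q P m H fuel. induction fuel as [|n IH]; intros i Hi; simpl; auto.
  rewrite H by lia. destruct (P i); auto. f_equal. apply IH. lia.
Qed.

Lemma filter_map_S : forall (g : nat -> bool) l,
  filter g (map S l) = map S (filter (fun x => g (S x)) l).
Proof.
  intros g l. induction l; simpl; auto. destruct (g (S a)); simpl; rewrite IHl; auto.
Qed.

Lemma shift_lens : forall (Q P : nat -> bool) m, 1 <= m -> Q 0 = true -> P 0 = true ->
  (forall j, j < m -> Q (S j) = P j) ->
  exists tl, lens_of Q (S m) = S (lenF P 0 m) :: tl /\ lens_of P m = lenF P 0 m :: tl.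
Proof.
  intros Q P m Hm HQ HP H. destruct m as [|m']; [lia|].
  exists (map (fun i => lenF P i (S m' - i)) (filter (startb P) (seq 1 m'))).
  unfold lens_of. change (seq 0 (S (S m'))) with (0 :: 1 :: seq 2 m').
  change (seq 0 (S m')) with (0 :: seq 1 m').
  assert (S1 : startb Q 1 = false) by (unfold startb; rewrite HQ; apply Bool.andb_false_r).
  assert (S0 : startb Q 0 = true) by (unfold startb; rewrite HQ; auto).
  assert (P0 : startb P 0 = true) by (unfold startb; rewrite HP; auto).
  simpl filter. rewrite S0, S1, P0.
  split.
  - cbn [map]. rewrite Nat.sub_0_r. f_equal.
    + rewrite <- (lenF_shift Q P (S m') H (S m') 0) by lia. simpl. rewrite HQ. reflexivity.
    + rewrite <- seq_shift, filter_map_S, map_map.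
      rewrite (filter_ext_in _ (startb P)).
      * apply map_ext_in. intros a Ha. rewrite filter_In, in_seq in Ha.
        replace (S (S m') - S a) with (S m' - a) by lia. apply (lenF_shift Q P (S m')); auto. lia.
      * intros a Ha. rewrite in_seq in Ha. unfold startb.
        destruct a as [|a]; [lia|]. rewrite H by lia. rewrite H by lia. auto.
  - cbn [map]. rewrite Nat.sub_0_r. auto.
Qed.

Open Scope nat_scope.

Lemma si_iff_sym : forall a b, seg_intersect a b <-> seg_intersect b a.
Proof. intros; split; apply seg_intersect_sym. Qed.

Lemma merge_rep : forall m s, 3 <= m -> ipseg_rep (S m) s -> interval_seg (s 0) -> interval_seg (s 1) ->
  exists s', ipseg_rep m s' /\ interval_seg (s' 0) /\ forall j, s' (S j) = s (S (S j)).
Proof.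
  intros m s Hm [Hip Hint] I0 I1.
  assert (S01 : seg_intersect (s 0) (s 1)).
  { apply Hint; try lia. apply adj_char; lia. }
  destruct (merge_seg _ _ I0 I1 S01) as [U [IU HU]].
  assert (UI : forall x, seg_intersect U x <-> seg_intersect (s 0) x \/ seg_intersect (s 1) x).
  { intros x. split.
    - intros [z [Z1 Z2]]. apply HU in Z1. destruct Z1; [left|right]; exists z; auto.
    - intros [[z [Z1 Z2]]|[z [Z1 Z2]]]; exists z; split; auto; apply HU; auto. }
  exists (fun j => match j with 0 => U | S k => s (S (S k)) end).
  split; [split|split; [auto|reflexivity]].
  - intros [|k] Hk; [left; auto|]. apply Hip. lia.
  - intros [|i] [|j] Hi Hj Hij; try lia.
    + rewrite UI, Hint, Hint by lia. rewrite !adj_char by lia. split; intros; lia.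
    + rewrite si_iff_sym, UI, Hint, Hint by lia. rewrite !adj_char by lia. split; intros; lia.
    + rewrite Hint by lia. rewrite !adj_char by lia. split; intros; lia.
Qed.

Open Scope R_scope.
Definition e0 := hseg 0 0 1.
Definition e1 := hseg 0 1 3.
Definition e2 := mkSeg (3,0) (1,1).
Definition e3 := mkSeg (0,0) (2,1).

Lemma F01 : seg_intersect e0 e1.
Proof. exists (1,0). unfold e0, e1. rewrite !on_hseg by lra. simpl. lra. Qed.
Lemma F12 : seg_intersect e1 e2.
Proof. exists (3,0). unfold e1. rewrite !on_hseg by lra. split; [simpl; lra|].
  exists 0. simpl. lra. Qed.
Lemma F23 : seg_intersect e2 e3.
Proof. exists (3/2,3/4). split; exists (3/4); simpl; lra. Qed.
Lemma F30 : seg_intersect e3 e0.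
Proof. exists (0,0). unfold e0. rewrite on_hseg by lra. split; [exists 0; simpl; lra|simpl; lra]. Qed.
Lemma N02 : ~ seg_intersect e0 e2.
Proof. intros [z [Z1 [lam [L [Hx Hy]]]]]. unfold e0 in Z1. rewrite on_hseg in Z1 by lra.
  simpl in *. lra. Qed.
Lemma N13 : ~ seg_intersect e1 e3.
Proof. intros [z [Z1 [lam [L [Hx Hy]]]]]. unfold e1 in Z1. rewrite on_hseg in Z1 by lra.
  simpl in *. lra. Qed.
Close Scope R_scope.

Definition c4 (j : nat) : segment :=
  match j with 0 => e0 | 1 => e1 | 2 => e2 | _ => e3 end.

Lemma e2_perm : permutation_seg e2.
Proof. left. unfold on_L1, on_L2; simpl; split; reflexivity. Qed.
Lemma e3_perm : permutation_seg e3.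
Proof. left. unfold on_L1, on_L2; simpl; split; reflexivity. Qed.
Lemma e0_int : interval_seg e0.
Proof. apply interval_hseg; [left; reflexivity| lra]. Qed.
Lemma e1_int : interval_seg e1.
Proof. apply interval_hseg; [left; reflexivity| lra]. Qed.

Lemma c4_rep : ipseg_rep 4 c4.
Proof.
  pose proof F01. pose proof F12. pose proof F23. pose proof F30.
  split.
  - intros [|[|[|[|i]]]] Hi; simpl.
    + left; apply e0_int. + left; apply e1_int. + right; apply e2_perm. + right; apply e3_perm. + lia.
  - intros [|[|[|[|i]]]] [|[|[|[|j]]]] Hi Hj Hij; try lia; simpl c4; split; intro Hs.
    all: try (unfold cycle_adj; simpl; lia).
    all: try assumption.
    all: try (apply seg_intersect_sym; assumption).
    all: try (exfalso; apply N02; first [assumption | apply seg_intersect_sym; assumption]).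
    all: try (exfalso; apply N13; first [assumption | apply seg_intersect_sym; assumption]).
    all: try (exfalso; unfold cycle_adj in Hs; simpl in Hs; lia).
Qed.

Lemma split_rep : forall m s, 3 <= m -> ipseg_rep m s -> interval_seg (s 0) ->
  ~ interval_seg (s (m - 1)) -> (m = 3 -> ~ interval_seg (s 1)) ->
  exists s', ipseg_rep (S m) s' /\ interval_seg (s' 0) /\
    forall j, j < m -> (interval_seg (s' (S j)) <-> interval_seg (s j)).
Proof.
  intros m s Hm [Hip Hint] I0 Hlast H3.
  destruct (Nat.eq_dec m 3) as [E|E].
  - subst m. exists c4. split; [apply c4_rep|split; [apply e0_int|]].
    intros [|[|[|j]]] Hj; simpl.
    + split; intros; auto; apply e1_int.
    + split; intros H; [exfalso; apply (perm_not_interval _ e2_perm); auto|exfalso; apply H3; auto].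
    + split; intros H; [exfalso; apply (perm_not_interval _ e3_perm); auto|exfalso; apply Hlast; auto].
    + lia.
  - assert (Hm4 : 4 <= m) by lia.
    destruct (interval_desc _ I0) as [h [lo [hi [Hh [Hlh DI]]]]].
    assert (Sa : seg_intersect (s 0) (s 1)) by (apply Hint; try lia; apply adj_char; lia).
    assert (Sb : seg_intersect (s 0) (s (m-1))) by (apply Hint; try lia; apply adj_char; lia).
    assert (Nab : ~ seg_intersect (s 1) (s (m-1))).
    { rewrite Hint by lia. rewrite adj_char by lia. lia. }
    destruct (split_seg (s 0) (s 1) (s (m-1)) h lo hi Hlh Hh DI (Hip 1 ltac:(lia)) (Hip (m-1) ltac:(lia))
      Sa Sb Nab) as [c1 [c2 [Ic1 [Ic2 [S12 [S1b [S2a [N1a [N2b [In1 In2]]]]]]]]]].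
    assert (C1 : forall k, S k < m -> (seg_intersect c1 (s (S k)) <-> S k = m - 1)).
    { intros k Hk. destruct (Nat.eq_dec (S k) (m-1)) as [e|e].
      - rewrite e. split; auto.
      - split; [intros H; exfalso|lia]. destruct (Nat.eq_dec (S k) 1) as [e'|e'].
        + rewrite e' in H. auto.
        + destruct H as [z [Z1 Z2]]. assert (HS : seg_intersect (s 0) (s (S k))) by (exists z; auto).
          rewrite Hint in HS by lia. rewrite adj_char in HS by lia. lia. }
    assert (C2 : forall k, S k < m -> (seg_intersect c2 (s (S k)) <-> S k = 1)).
    { intros k Hk. destruct (Nat.eq_dec (S k) 1) as [e|e].
      - rewrite e. split; auto.
      - split; [intros H; exfalso|lia]. destruct (Nat.eq_dec (S k) (m-1)) as [e'|e'].
        + rewrite e' in H. auto.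
        + destruct H as [z [Z1 Z2]]. assert (HS : seg_intersect (s 0) (s (S k))) by (exists z; auto).
          rewrite Hint in HS by lia. rewrite adj_char in HS by lia. lia. }
    exists (fun j => match j with 0 => c1 | 1 => c2 | S (S k) => s (S k) end).
    split; [split|split; [auto|]].
    + intros [|[|k]] Hk; [left; auto|left; auto|]. apply Hip. lia.
    + intros [|[|i]] [|[|j]] Hi Hj Hij; try lia.
      * split; intros; [apply adj_char; lia|auto].
      * rewrite C1 by lia. rewrite adj_char by lia. split; intros; lia.
      * split; intros; [apply adj_char; lia|apply seg_intersect_sym; auto].
      * rewrite C2 by lia. rewrite adj_char by lia. split; intros; lia.
      * rewrite si_iff_sym, C1 by lia. rewrite adj_char by lia. split; intros; lia.
      * rewrite si_iff_sym, C2 by lia. rewrite adj_char by lia. split; intros; lia.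
      * rewrite Hint by lia. rewrite !adj_char by lia. split; intros; lia.
    + intros [|j] Hj; [split; intros; auto|reflexivity].
Qed.

Open Scope nat_scope.

Lemma ib_iff : forall x y, (interval_seg x <-> interval_seg y) -> ib x = ib y.
Proof.
  intros x y H. destruct (ib y) eqn:E.
  - apply ib_true. apply H. apply ib_true; auto.
  - apply ib_false. rewrite H. apply ib_false; auto.
Qed.

Lemma step : forall m l rest, 3 <= m -> (m = 3 -> l = 0) ->
  (has_rep_with_arcs (S m) (S (S l) :: rest) <-> has_rep_with_arcs m (S l :: rest)).
Proof.
  intros m l rest Hm H3. split.
  - intros H.
    destruct (normalize (S m) _ (S (S l)) H (in_eq _ _)) as [s [Hrep [Harcs [Hst Hlen]]]].
    destruct Hst as [_ [I0 NL]].
    replace ((0 + S m - 1) mod S m) with m in NL by (rewrite Nat.mod_small; lia).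
    assert (I1 : interval_seg (s 1)).
    { destruct Hlen as [A _]. specialize (A 1 ltac:(lia)). rewrite Nat.mod_small in A by lia. auto. }
    destruct (merge_rep m s Hm Hrep I0 I1) as [s' [Hrep' [I0' Es']]].
    apply Arcs_lin in Harcs; [|lia|replace (S m - 1) with m by lia; auto].
    destruct Harcs as [Hmix HP].
    destruct (shift_lens (fun j => ib (s j)) (fun j => ib (s' j)) m ltac:(lia))
      as [tl [EQ1 EQ2]].
    + apply ib_true; auto.
    + apply ib_true; auto.
    + intros [|j] Hj.
      * rewrite (proj2 (ib_true _) I1). symmetry. apply ib_true; auto.
      * rewrite Es'. reflexivity.
    + assert (HL : lenF (fun j => ib (s' j)) 0 m = S l).
      { assert (E1 : lenF (fun j => ib (s j)) 0 (S m) = S (lenF (fun j => ib (s' j)) 0 m)).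
        { cbn [lenF]. rewrite (proj2 (ib_true _) I0). f_equal.
          apply (lenF_shift _ _ m); [|lia].
          intros [|j] Hj; [rewrite (proj2 (ib_true _) I1); symmetry; apply ib_true; auto|].
          rewrite Es'. reflexivity. }
        pose proof (lenF_arc (S m) s 0 ltac:(replace (S m - 1) with m by lia; auto) ltac:(lia)) as LA.
        rewrite Nat.sub_0_r in LA. pose proof (arc_length_unique _ _ _ _ _ LA Hlen). lia. }
      rewrite EQ1, HL in HP. apply Permutation_cons_inv in HP.
      exists s'. split; auto.
      assert (NL' : ~ interval_seg (s' (m - 1))).
      { replace (m - 1) with (S (m - 2)) by lia. rewrite Es'. replace (S (S (m - 2))) with m by lia. auto. }
      apply Arcs_lin; [lia|auto|]. split.
      * split; [exists 0; split; [lia|auto]|]. exists (m - 1). split; [lia|].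
        destruct Hrep' as [Hip _]. destruct (Hip (m-1) ltac:(lia)); [contradiction|auto].
      * rewrite EQ2, HL. apply perm_skip. auto.
  - intros H.
    destruct (normalize m _ (S l) H (in_eq _ _)) as [s [Hrep [Harcs [Hst Hlen]]]].
    destruct Hst as [_ [I0 NL]].
    replace ((0 + m - 1) mod m) with (m - 1) in NL by (rewrite Nat.mod_small; lia).
    assert (N1 : m = 3 -> ~ interval_seg (s 1)).
    { intros E. specialize (H3 E). subst l. destruct Hlen as [_ B].
      rewrite Nat.mod_small in B by lia. auto. }
    destruct (split_rep m s Hm Hrep I0 NL N1) as [s' [Hrep' [I0' Hpat]]].
    apply Arcs_lin in Harcs; [|lia|auto].
    destruct Harcs as [Hmix HP].
    destruct (shift_lens (fun j => ib (s' j)) (fun j => ib (s j)) m ltac:(lia))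
      as [tl [EQ1 EQ2]].
    + apply ib_true; auto.
    + apply ib_true; auto.
    + intros j Hj. apply ib_iff. apply Hpat. auto.
    + assert (HL : lenF (fun j => ib (s j)) 0 m = S l).
      { pose proof (lenF_arc m s 0 NL ltac:(lia)) as LA.
        rewrite Nat.sub_0_r in LA. apply (arc_length_unique _ _ _ _ _ LA Hlen). }
      rewrite EQ2, HL in HP. apply Permutation_cons_inv in HP.
      exists s'. split; auto.
      assert (NL' : ~ interval_seg (s' (S m - 1))).
      { replace (S m - 1) with (S (m - 1)) by lia. rewrite Hpat by lia. auto. }
      apply Arcs_lin; [lia|auto|]. split.
      * split; [exists 0; split; [lia|auto]|]. exists (S m - 1). split; [lia|].
        destruct Hrep' as [Hip _]. destruct (Hip (S m - 1) ltac:(lia)); [contradiction|auto].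
      * rewrite EQ1, HL. apply perm_skip. auto.
Qed.

Lemma has_rep_perm : forall m l1 l2, Permutation l1 l2 -> has_rep_with_arcs m l1 -> has_rep_with_arcs m l2.
Proof.
  intros m l1 l2 P [s [Hr [Hm [st [ln [A [B [C D]]]]]]]].
  exists s. split; auto. split; auto. exists st, ln.
  split; [auto|split; [auto|split; [exact C|eapply Permutation_trans; eauto]]].
Qed.

Lemma n_prime_perm : forall l1 l2, Permutation l1 l2 -> n_prime l1 = n_prime l2.
Proof. intros l1 l2 P. induction P; simpl in *; lia. Qed.

Lemma n_prime_zero : forall ls, Forall (fun l => 1 <= l) ls -> n_prime ls = 0 -> ls = repeat 1 (length ls).
Proof.
  intros ls H. induction H; simpl; auto. intros E. f_equal; [lia|]. apply IHForall. lia.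
Qed.

Lemma n_prime_pos : forall ls, n_prime ls <> 0 -> exists l rest, Permutation ls (S (S l) :: rest).
Proof.
  induction ls as [|x ls IH]; simpl; intros H; [lia|].
  destruct x as [|[|x]].
  - destruct IH as [l [rest P]]; [simpl in H; lia|]. exists l, (0 :: rest).
    eapply Permutation_trans; [apply perm_skip; exact P|]. apply perm_swap.
  - destruct IH as [l [rest P]]; [simpl in H; lia|]. exists l, (1 :: rest).
    eapply Permutation_trans; [apply perm_skip; exact P|]. apply perm_swap.
  - exists x, ls. auto.
Qed.

Lemma main_gen : forall k ls n, n_prime ls = k -> Forall (fun l => 1 <= l) ls -> 3 + k <= n ->
  (has_rep_with_arcs n ls <-> has_rep_with_arcs (n - k) (repeat 1 (length ls))).
Proof.
  induction k as [|k IH]; intros ls n Hk HF Hn.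
  - rewrite Nat.sub_0_r. rewrite <- (n_prime_zero ls HF Hk). tauto.
  - destruct (n_prime_pos ls ltac:(lia)) as [l [rest P]].
    assert (Hk' : n_prime (S (S l) :: rest) = S k) by (rewrite <- (n_prime_perm _ _ P); auto).
    simpl in Hk'.
    destruct n as [|m]; [lia|].
    assert (HF' : Forall (fun l => 1 <= l) (S l :: rest)).
    { constructor; [lia|]. rewrite Forall_forall in *. intros x Hx. apply HF.
      apply (Permutation_in _ (Permutation_sym P)). right; auto. }
    split.
    + intros H. apply (has_rep_perm _ _ _ P) in H. apply (proj1 (step m l rest ltac:(lia) ltac:(lia))) in H.
      apply (IH (S l :: rest) m) in H; [|simpl; lia|auto|lia].
      rewrite (Permutation_length P). simpl in H |- *. replace (m - k) with (S m - S k) in H by lia. auto.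
    + intros H. apply (has_rep_perm _ _ _ (Permutation_sym P)).
      apply (proj2 (step m l rest ltac:(lia) ltac:(lia))).
      apply (IH (S l :: rest) m); [simpl; lia|auto|lia|].
      rewrite (Permutation_length P) in H. simpl in H |- *. replace (m - k) with (S m - S k) by lia. auto.
Qed.

Close Scope nat_scope.
Close Scope R_scope.

Theorem mainTheorem4 (n t : nat) (ls : list nat) :
  (4 <= n)%nat -> (1 <= t)%nat -> length ls = t ->
  Forall (fun l => (1 <= l)%nat) ls ->
  (3 <= n - n_prime ls)%nat ->
  (has_rep_with_arcs n ls <->
   has_rep_with_arcs (n - n_prime ls) (repeat 1%nat t)).
Proof.
  intros Hn Ht Hl HF H3. subst t. apply main_gen; auto. lia.
Qed.
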